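(* Let $(P_i)_{i\ge0}$ be any walk in $\mathbb Z^2$ (in particular an $\alpha$-random walk), $k\ge1$, $m\ge1$ integers. For $i\ge1$ let $X_i=1$ if $P_i$ is visible (else $0$), $X_i(m)=1$ if $P_i$ is visible at level $m$ (else $0$), $Z_i(m)=X_i(m)-X_i$, and set $$\overline S_{n,k}=\frac1n\sum_{i=1}^n X_i\cdots X_{i+k-1},\quad \overline S_{n,k}(m)=\frac1n\sum_{i=1}^n X_i(m)\cdots X_{i+k-1}(m),\quad \overline Z_n(m)=\frac1n\sum_{i=1}^n Z_i(m).$$ Then for every $n\ge1$, $$\overline S_{n,k}(m)-k\overline Z_n(m)-\frac{k^2}{2n}\le\overline S_{n,k}\le\overline S_{n,k}(m).$$
   Context: A lattice point $(a,b)$ is visible if $\gcd(a,b)=1$, and visible at level $m$ if no prime $p<m$ divides both $a$ and $b$. *)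

(* Defs.v *)
From mathcomp Require Import all_boot all_order all_algebra.
Set Implicit Arguments. Unset Strict Implicit. Unset Printing Implicit Defensive.
Import Order.TTheory GRing.Theory Num.Theory.
Local Open Scope ring_scope.

Definition visible (p : int * int) : bool := gcdz p.1 p.2 == 1%Z.

Definition visible_at (m : nat) (p : int * int) : bool :=
  [forall q : 'I_m, prime q ==> ~~ ((q %| `|p.1|)%N && (q %| `|p.2|)%N)].

Definition Xv (P : nat -> int * int) (i : nat) : rat := (visible (P i))%:R.
Definition Xm (P : nat -> int * int) (m i : nat) : rat := (visible_at m (P i))%:R.
Definition Zm (P : nat -> int * int) (m i : nat) : rat := Xm P m i - Xv P i.

Definition Sbar (P : nat -> int * int) (n k : nat) : rat :=
  (n%:R)^-1 * \sum_(1 <= i < n.+1) \prod_(i <= j < i + k) Xv P j.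
Definition Sbar_m (P : nat -> int * int) (m n k : nat) : rat :=
  (n%:R)^-1 * \sum_(1 <= i < n.+1) \prod_(i <= j < i + k) Xm P m j.
Definition Zbar (P : nat -> int * int) (m n : nat) : rat :=
  (n%:R)^-1 * \sum_(1 <= i < n.+1) Zm P m i.

(* Main.v *)
Require Import Defs.
From mathcomp Require Import all_boot all_order all_algebra.
From mathcomp Require Import ring lra.
Import Order.TTheory GRing.Theory Num.Theory.
Local Open Scope ring_scope.

Lemma vis_at (m : nat) p : visible p -> visible_at m p.
Proof.
rewrite /visible /visible_at => /eqP H; apply/forallP => q; apply/implyP => pq.
apply/negP => /andP [h1 h2].
have : (q %| gcdn `|p.1| `|p.2|)%N by rewrite dvdn_gcd h1 h2.
have -> : gcdn `|p.1| `|p.2| = 1%N by move: H; rewrite /gcdz => -[].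
by rewrite dvdn1 => /eqP hq; rewrite hq in pq.
Qed.

Lemma prod_bounds (a b : nat -> rat) i k :
  (forall j, 0 <= a j) -> (forall j, a j <= b j) -> (forall j, b j <= 1) ->
  [/\ 0 <= \prod_(i <= j < i + k) a j,
      \prod_(i <= j < i + k) a j <= \prod_(i <= j < i + k) b j,
      \prod_(i <= j < i + k) b j <= 1 &
      \prod_(i <= j < i + k) b j - \prod_(i <= j < i + k) a j
        <= \sum_(i <= j < i + k) (b j - a j)].
Proof.
move=> a0 ab b1; elim: k => [|k [A0 AB B1 D]].
  by rewrite addn0 !big_geq // subrr.
rewrite addnS !big_nat_recr ?leq_addr //=.
set A := \prod_(i <= j < i + k) a j in A0 AB B1 D *.
set B := \prod_(i <= j < i + k) b j in AB B1 D *.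
set S := \sum_(i <= j < i + k) (b j - a j) in D *.
have x0 := a0 (i + k); have xy := ab (i + k); have y1 := b1 (i + k).
set x := a (i + k) in x0 xy y1 *; set y := b (i + k) in xy y1 *.
have B0 : 0 <= B by apply: le_trans AB.
split.
- exact: mulr_ge0.
- by apply: ler_pM.
- by rewrite -[1]mulr1; apply: ler_pM => //; apply: le_trans xy.
- have h1 : B * (y - x) <= y - x by apply: ler_piMl; rewrite // subr_ge0.
  have h2 : (B - A) * x <= B - A by apply: ler_piMr; [rewrite subr_ge0 | apply: le_trans xy y1].
  have -> : B * y - A * x = B * (y - x) + (B - A) * x by ring.
  lra.
Qed.

Lemma shift_bound (Z : nat -> rat) n t :
  (forall j, 0 <= Z j) -> (forall j, Z j <= 1) ->
  \sum_(1 <= i < n.+1) Z (i + t)%N <= \sum_(1 <= j < n.+1) Z j + t%:R.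
Proof.
move=> Z0 Z1.
have -> : \sum_(1 <= i < n.+1) Z (i + t)%N = \sum_(1 + t <= j < n.+1 + t) Z j.
  by rewrite big_addn addnK.
have e1 : \sum_(1 <= i < n.+1 + t) Z i
   = \sum_(1 <= i < 1 + t) Z i + \sum_(1 + t <= i < n.+1 + t) Z i.
  by rewrite -big_cat_nat // ?leq_addr // leq_add2r.
have e2 : \sum_(1 <= i < n.+1 + t) Z i
   = \sum_(1 <= i < n.+1) Z i + \sum_(n.+1 <= i < n.+1 + t) Z i.
  by rewrite -big_cat_nat // ?leq_addr.
have h1 : 0 <= \sum_(1 <= i < 1 + t) Z i by apply: sumr_ge0 => j _.
have h2 : \sum_(n.+1 <= i < n.+1 + t) Z i <= t%:R.
  apply: le_trans (_ : \sum_(n.+1 <= i < n.+1 + t) 1 <= _).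
    by apply: ler_sum => j _.
  by rewrite sumr_const_nat addKn.
lra.
Qed.

Lemma tri_bound (k : nat) : \sum_(0 <= t < k) (t%:R : rat) <= (k ^ 2)%:R / 2%:R.
Proof.
rewrite -natr_sum bin2_sum bin2.
have h : ((k * k.-1)./2 * 2 <= k ^ 2)%N.
  have := halfK (k * k.-1); rewrite -muln2 => ->.
  apply: leq_trans (leq_subr _ _) _; rewrite expnS expn1 leq_mul2l leq_pred orbT //.
rewrite ler_pdivlMr // -natrM ler_nat //.
Qed.

Theorem lemma7 (P : nat -> int * int) (k m n : nat) :
  (1 <= k)%N -> (1 <= m)%N -> (1 <= n)%N ->
  Sbar_m P m n k - k%:R * Zbar P m n - (k ^ 2)%:R / (2 * n)%:R <= Sbar P n k
  /\ Sbar P n k <= Sbar_m P m n k.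
Proof.
move=> hk hm hn.
have a0 : forall j, 0 <= Xv P j by move=> j; rewrite /Xv ler0n.
have ab : forall j, Xv P j <= Xm P m j.
  move=> j; rewrite /Xv /Xm; case hv: (visible (P j)).
    by rewrite (@vis_at m _ hv).
  by rewrite ler0n.
have b1 : forall j, Xm P m j <= 1 by move=> j; rewrite /Xm; case: (visible_at _ _).
have Z0 : forall j, 0 <= Zm P m j by move=> j; rewrite /Zm subr_ge0.
have Z1 : forall j, Zm P m j <= 1.
  by move=> j; have := a0 j; have := b1 j; rewrite /Zm; lra.
have ninv : 0 <= (n%:R : rat)^-1 by rewrite invr_ge0 ler0n.
rewrite /Sbar /Sbar_m /Zbar.
set SA := \sum_(1 <= i < n.+1) \prod_(i <= j < i + k) Xv P j.
set SB := \sum_(1 <= i < n.+1) \prod_(i <= j < i + k) Xm P m j.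
set SZ := \sum_(1 <= i < n.+1) Zm P m i.
split; last first.
  apply: ler_wpM2l => //; apply: ler_sum => i _.
  by case: (@prod_bounds _ _ i k a0 ab b1).
have key : SB - SA <= k%:R * SZ + (k ^ 2)%:R / 2%:R.
  rewrite /SB /SA -sumrB.
  apply: le_trans (_ : \sum_(1 <= i < n.+1) \sum_(0 <= t < k) Zm P m (i + t)%N <= _).
    apply: ler_sum => i _.
    case: (@prod_bounds _ _ i k a0 ab b1) => _ _ _ D.
    apply: le_trans D _.
    rewrite -{1}[i]add0n big_addn addKn.
    rewrite le_eqVlt; apply/orP; left; apply/eqP; apply: eq_bigr => t _; by rewrite /Zm addnC.

  rewrite exchange_big_nat /=.
  apply: le_trans (_ : \sum_(0 <= t < k) (SZ + t%:R) <= _).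
    by apply: ler_sum => t _; apply: shift_bound.
  rewrite big_split /= sumr_const_nat subn0 mulr_natl.
  by have := tri_bound k; lra.
have -> : (k ^ 2)%:R / (2 * n)%:R = (n%:R)^-1 * ((k ^ 2)%:R / 2%:R) :> rat.
  by rewrite natrM invfM; ring.
have -> : k%:R * ((n%:R)^-1 * SZ) = (n%:R)^-1 * (k%:R * SZ) :> rat.
  by rewrite mulrCA.
rewrite -!mulrBr; apply: ler_wpM2l => //; lra.
Qed.
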